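(* For every $(x_n)\in\ell_1^{*}$ there exists an ideal $I$ on $\mathbb{N}$ with $\mathrm{Fin}\subseteq I$ and $I\neq\mathrm{Fin}$ such that $A_I(x_n)$ is meager and has Lebesgue measure zero.
   Context: $\ell_1^{*}=\{(x_n)\in\ell_1 : x_n\neq 0\text{ for every }n\}$. An ideal on $\mathbb{N}$ is a family $I\subseteq P(\mathbb{N})$ closed under finite unions and subsets with $\mathbb{N}\notin I$; $\mathrm{Fin}$ is the ideal of finite sets. $A_I(x_n)=\{\sum_{n\in A}x_n : A\in I\}$. *)

(* Defs.v *)
From Stdlib Require Import Reals Rtopology.
Open Scope R_scope.

(* Subsets of N are represented by their characteristic functions nat -> bool. *)
Definition subsetN (A B : nat -> bool) : Prop := forall n, A n = true -> B n = true.
Definition unionN (A B : nat -> bool) : nat -> bool := fun n => orb (A n) (B n).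

Definition is_ideal (I : (nat -> bool) -> Prop) : Prop :=
  (forall A B, I A -> I B -> I (unionN A B)) /\
  (forall A B, subsetN A B -> I B -> I A) /\
  ~ I (fun _ => true).

Definition Fin (A : nat -> bool) : Prop := exists N, forall n, A n = true -> (n < N)%nat.

Definition ell1_star (x : nat -> R) : Prop :=
  (exists l, infinite_sum (fun n => Rabs (x n)) l) /\ (forall n, x n <> 0).

(* sum_{n in A} x_n (series of x restricted to A). *)
Definition restr (x : nat -> R) (A : nat -> bool) : nat -> R :=
  fun n => if A n then x n else 0.

Definition A_I (I : (nat -> bool) -> Prop) (x : nat -> R) : R -> Prop :=
  fun s => exists A, I A /\ infinite_sum (restr x A) s.

Definition nowhere_dense (F : R -> Prop) : Prop :=
  forall y, ~ interior (adherence F) y.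

Definition meager (S : R -> Prop) : Prop :=
  exists F : nat -> R -> Prop,
    (forall k, nowhere_dense (F k)) /\ (forall y, S y -> exists k, F k y).

Definition null_set (S : R -> Prop) : Prop :=
  forall eps, 0 < eps ->
    exists a b : nat -> R,
      (forall k, a k <= b k) /\
      (forall y, S y -> exists k, a k <= y <= b k) /\
      exists l, infinite_sum (fun k => b k - a k) l /\ l < eps.

(* Main.v *)
Require Import Defs.
From Stdlib Require Import Reals Rtopology Lra Lia List Classical.
Open Scope R_scope.

Fixpoint psum (f : nat -> R) (L : nat) : R :=
  match L with O => 0 | S m => psum f m + f m end.

Lemma psum_sum f n : sum_f_R0 f n = psum f (S n).
Proof. induction n; simpl in *; [lra|]. rewrite IHn. simpl. lra. Qed.

Definition hh (l : nat) : nat := (2^(l+2) + l + 1)%nat.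
Definition bnd (l c : nat) : R := (/2)^(hh l + c).
Definition pick (x : nat -> R) (n l c : nat) : bool :=
  Nat.odd n && (if Rle_dec (Rabs (x n)) (bnd l c) then true else false).
Fixpoint st (x : nat -> R) (n : nat) : nat * nat :=
  match n with
  | O => (O, O)
  | S m => let p := st x m in if pick x m (fst p) (snd p) then (m, S (snd p)) else p
  end.
Definition lst x n := fst (st x n).
Definition cnt x n := snd (st x n).
Definition EE x n := pick x n (lst x n) (cnt x n).

Lemma EE_bound x n : EE x n = true -> Rabs (x n) <= bnd (lst x n) (cnt x n).
Proof. unfold EE, pick. destruct (Rle_dec _ _); auto. rewrite Bool.andb_false_r. discriminate. Qed.

Lemma EE_odd x n : EE x n = true -> Nat.odd n = true.
Proof. unfold EE, pick. destruct (Nat.odd n); auto. Qed.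

Lemma lst_S x n : lst x (S n) = if EE x n then n else lst x n.
Proof. unfold lst, EE, cnt. simpl. destruct (pick _ _ _ _); auto. Qed.
Lemma cnt_S x n : cnt x (S n) = if EE x n then S (cnt x n) else cnt x n.
Proof. unfold lst, EE, cnt. simpl. destruct (pick _ _ _ _); auto. Qed.

Lemma lst_le x n : (lst x n <= n)%nat.
Proof. induction n. reflexivity. rewrite lst_S. destruct (EE x n); lia. Qed.

Lemma lst_ge x M n : EE x M = true -> (S M <= n)%nat -> (M <= lst x n)%nat.
Proof.
  intros HE H. induction H. rewrite lst_S, HE. lia.
  rewrite lst_S. destruct (EE x m); lia.
Qed.

Definition Wf x n : R := if EE x n then (/2)^(cnt x n) else 0.

Lemma W_eq x L : psum (Wf x) L + 2 * (/2)^(cnt x L) = 2.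
Proof.
  induction L. simpl. unfold cnt; simpl. lra.
  simpl. rewrite cnt_S. unfold Wf at 2. destruct (EE x L).
  - simpl. lra.
  - lra.
Qed.

Lemma pow_half_pos n : 0 < (/2)^n.
Proof. apply pow_lt. lra. Qed.

Lemma pow_half_le m n : (m <= n)%nat -> (/2)^n <= (/2)^m.
Proof. intros H. induction H. lra. simpl. pose proof (pow_half_pos m0). lra. Qed.

Lemma hh_mono a b : (a <= b)%nat -> (hh a <= hh b)%nat.
Proof. intros. unfold hh. assert (2^(a+2) <= 2^(b+2))%nat by (apply Nat.pow_le_mono_r; lia). lia. Qed.

Definition wit x (A : nat -> bool) (N : nat) := forall n, A n = true -> (n < N)%nat \/ EE x n = true.

Lemma psum_W_nonneg x L : 0 <= psum (Wf x) L.
Proof. induction L; simpl. lra. unfold Wf at 2. destruct (EE x L). pose proof (pow_half_pos (cnt x L)). lra. lra. Qed.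

Lemma psum_S f n : psum f (S n) = psum f n + f n.
Proof. reflexivity. Qed.

Definition tau (m : nat) : R := 2 * (/2)^(hh m).

Lemma tail_fin x A N m L : wit x A N -> (N <= S m)%nat -> EE x m = true -> (S m <= L)%nat ->
  Rabs (psum (restr x A) L - psum (restr x A) (S m)) <=
  (/2)^(hh m) * (psum (Wf x) L - psum (Wf x) (S m)).
Proof.
  intros HW HN HE HL. induction HL.
  - rewrite Rminus_diag, Rabs_R0. lra.
  - rewrite (psum_S (restr x A) m0), (psum_S (Wf x) m0). unfold restr at 2. unfold Wf at 2.
    destruct (A m0) eqn:HA.
    + destruct (HW m0 HA) as [H|H]; [lia|]. rewrite H.
      pose proof (EE_bound x m0 H) as Hb. unfold bnd in Hb. rewrite pow_add in Hb.
      pose proof (lst_ge x m m0 HE HL).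
      pose proof (pow_half_le _ _ (hh_mono _ _ H0)).
      pose proof (pow_half_pos (cnt x m0)).
      assert (Rabs (x m0) <= (/2)^(hh m) * (/2)^(cnt x m0)).
      { eapply Rle_trans; [exact Hb|]. apply Rmult_le_compat_r; lra. }
      replace (psum (restr x A) m0 + x m0 - psum (restr x A) (S m))
        with ((psum (restr x A) m0 - psum (restr x A) (S m)) + x m0) by ring.
      eapply Rle_trans; [apply Rabs_triang|].
      replace ((/ 2) ^ hh m * (psum (Wf x) m0 + (/ 2) ^ cnt x m0 - psum (Wf x) (S m))) with
        ((/ 2) ^ hh m * (psum (Wf x) m0 - psum (Wf x) (S m)) + (/ 2) ^ hh m * (/ 2) ^ cnt x m0) by ring.
      lra.
    + destruct (EE x m0).
      * pose proof (pow_half_pos (cnt x m0)). pose proof (pow_half_pos (hh m)).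
        replace (psum (restr x A) m0 + 0 - psum (restr x A) (S m))
          with (psum (restr x A) m0 - psum (restr x A) (S m)) by ring.
        assert (0 <= (/2)^(hh m) * (/2)^(cnt x m0)) by (apply Rmult_le_pos; lra).
        nra.
      * replace (psum (restr x A) m0 + 0 - psum (restr x A) (S m))
          with (psum (restr x A) m0 - psum (restr x A) (S m)) by ring.
        replace (psum (Wf x) m0 + 0 - psum (Wf x) (S m))
          with (psum (Wf x) m0 - psum (Wf x) (S m)) by ring. exact IHHL.
Qed.

Lemma tail_fin2 x A N m L : wit x A N -> (N <= S m)%nat -> EE x m = true -> (S m <= L)%nat ->
  Rabs (psum (restr x A) L - psum (restr x A) (S m)) <= tau m.
Proof.
  intros. eapply Rle_trans; [eapply tail_fin; eauto|]. unfold tau.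
  pose proof (W_eq x L). pose proof (psum_W_nonneg x (S m)).
  pose proof (pow_half_pos (cnt x L)). pose proof (pow_half_pos (hh m)).
  rewrite Rmult_comm. apply Rmult_le_compat_r; lra.
Qed.

Lemma lim_le (u : nat -> R) s p t M :
  infinite_sum u s -> (forall L, (M <= L)%nat -> Rabs (psum u L - p) <= t) -> Rabs (s - p) <= t.
Proof.
  intros Hs H. destruct (Rle_dec (Rabs (s - p)) t) as [|Hn]; auto. exfalso.
  destruct (Hs (Rabs (s-p) - t)) as [N HN]. lra.
  specialize (HN (N + M)%nat ltac:(lia)). specialize (H (S (N+M)) ltac:(lia)).
  rewrite psum_sum in HN. unfold Rdist in HN.
  pose proof (Rabs_triang (s - psum u (S (N+M))) (psum u (S (N+M)) - p)).
  replace (s - psum u (S (N + M)) + (psum u (S (N + M)) - p)) with (s - p) in H0 by ring.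
  rewrite Rabs_minus_sym in HN. lra.
Qed.

Lemma tail x A N m s : wit x A N -> (N <= S m)%nat -> EE x m = true ->
  infinite_sum (restr x A) s -> Rabs (s - psum (restr x A) (S m)) <= tau m.
Proof. intros. eapply lim_le; eauto. intros. eapply tail_fin2; eauto. Qed.

Fixpoint PL (x : nat -> R) (M : nat) : list R :=
  match M with O => 0 :: nil | S m => PL x m ++ map (fun v => v + x m) (PL x m) end.

Lemma PL_len x M : length (PL x M) = (2^M)%nat.
Proof. induction M; simpl; auto. rewrite length_app, length_map, IHM. lia. Qed.

Lemma PL_in x A M : In (psum (restr x A) M) (PL x M).
Proof.
  induction M. { simpl; auto. } rewrite psum_S. simpl PL. apply in_or_app.
  destruct (A M) eqn:HA.
  - replace (restr x A M) with (x M) by (unfold restr; rewrite HA; auto).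
    right. apply in_map_iff. exists (psum (restr x A) M). split; [reflexivity|exact IHM].
  - replace (restr x A M) with 0 by (unfold restr; rewrite HA; auto).
    left. rewrite Rplus_0_r. auto.
Qed.

Definition G x k (s : R) := exists A, wit x A k /\ infinite_sum (restr x A) s.

Lemma G_cover x k m s : G x k s -> (k <= S m)%nat -> EE x m = true ->
  exists v, In v (PL x (S m)) /\ Rabs (s - v) <= tau m.
Proof. intros [A [HW Hs]] Hk HE. exists (psum (restr x A) (S m)). split. apply PL_in. eapply tail; eauto. Qed.

Lemma x_to_0 x : ell1_star x -> forall e, 0 < e -> exists n0, forall n, (n0 <= n)%nat -> Rabs (x n) < e.
Proof.
  intros [[l Hl] _] e He. destruct (Hl (e/2)) as [N HN]. lra.
  exists (S N). intros n Hn. destruct n as [|k]. lia.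
  pose proof (HN k ltac:(lia)). pose proof (HN (S k) ltac:(lia)).
  unfold Rdist in *. simpl sum_f_R0 in H0.
  apply Rabs_def2 in H. apply Rabs_def2 in H0. pose proof (Rabs_pos (x (S k))). lra.
Qed.

Lemma st_S x n : st x (S n) = if EE x n then (n, S (cnt x n)) else st x n.
Proof. unfold EE, lst, cnt. simpl. destruct (pick _ _ _ _); reflexivity. Qed.

Lemma EE_inf x : ell1_star x -> forall N, exists n, (N <= n)%nat /\ EE x n = true.
Proof.
  intros hx N. apply NNPP. intro Hc.
  assert (H : forall n, (N <= n)%nat -> EE x n = false).
  { intros n Hn. destruct (EE x n) eqn:He; auto. exfalso. apply Hc. eauto. }
  assert (Hst : forall n, (N <= n)%nat -> st x n = st x N).
  { intros n Hn. induction Hn. auto. rewrite st_S, H by lia. auto. }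
  pose (b := bnd (lst x N) (cnt x N)).
  assert (Hb : 0 < b) by apply pow_half_pos.
  destruct (x_to_0 x hx b Hb) as [n0 Hn0].
  set (n := (2 * (N + n0) + 1)%nat).
  assert (EE x n = true).
  { unfold EE, lst, cnt. rewrite (Hst n) by lia. unfold pick.
    replace (Nat.odd n) with true.
    - destruct (Rle_dec _ _) as [|Hn]; auto. exfalso. apply Hn. left. apply Hn0. lia.
    - symmetry. unfold n. rewrite Nat.add_comm, Nat.odd_add_mul_2. reflexivity. }
  rewrite H in H0 by lia. discriminate.
Qed.

Fixpoint tlen (l : list (R*R)) : R :=
  match l with nil => 0 | p :: t => (snd p - fst p) + tlen t end.

Lemma tlen_app l1 l2 : tlen (l1 ++ l2) = tlen l1 + tlen l2.
Proof. induction l1; simpl; lra. Qed.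

Lemma tlen_nonneg l : (forall p, In p l -> fst p <= snd p) -> 0 <= tlen l.
Proof. induction l; simpl; intros H. lra. pose proof (H a (or_introl eq_refl)).
  assert (0 <= tlen l) by (apply IHl; auto). lra. Qed.

Lemma cover_len_n n : forall l, (length l <= n)%nat -> (forall p, In p l -> fst p <= snd p) ->
  forall u v, u <= v -> (forall y, u <= y <= v -> exists p, In p l /\ fst p <= y <= snd p) ->
  v - u <= tlen l.
Proof.
  induction n; intros l Hlen Hok u v Huv Hcov.
  - destruct l; [|simpl in Hlen; lia]. destruct (Hcov u) as [p [[] _]]. lra.
  - destruct (Hcov u) as [p [Hp [Hpa Hpb]]]. lra.
    destruct (in_split _ _ Hp) as [l1 [l2 Heq]]. subst l.
    assert (Hok' : forall q, In q (l1 ++ l2) -> fst q <= snd q).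
    { intros q Hq. apply Hok. apply in_app_or in Hq. apply in_or_app. simpl. tauto. }
    rewrite tlen_app. simpl. rewrite length_app in Hlen. simpl in Hlen.
    pose proof (tlen_nonneg _ Hok') as Hn. rewrite tlen_app in Hn.
    destruct (Rle_dec v (snd p)).
    + lra.
    + assert (v - snd p <= tlen (l1 ++ l2)).
      { destruct (Rle_dec (v - snd p) (tlen (l1 ++ l2))) as [|Hc]; auto. exfalso.
        pose proof (tlen_nonneg _ Hok') as Hn0.
        remember ((v - snd p - tlen (l1 ++ l2)) / 2) as d eqn:Hdd.
        assert (Hd : 0 < d) by lra.
        assert (Hd2 : 2 * d <= v - snd p) by lra.
        assert (v - (snd p + d) <= tlen (l1 ++ l2)).
        { apply IHn. rewrite length_app. lia. auto. lra.
          intros y Hy. destruct (Hcov y) as [q [Hq Hqy]]. lra.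
          exists q. split; auto. apply in_app_or in Hq. destruct Hq as [Hq|[Hq|Hq]].
          apply in_or_app; auto. subst q.
          pose proof (tlen_nonneg _ Hok'). lra. apply in_or_app; auto. }
        lra. }
      rewrite tlen_app in H. lra.
Qed.

Lemma cover_len l : (forall p, In p l -> fst p <= snd p) ->
  forall u v, u <= v -> (forall y, u <= y <= v -> exists p, In p l /\ fst p <= y <= snd p) ->
  v - u <= tlen l.
Proof. intros. eapply cover_len_n; eauto. Qed.

Lemma tlen_map (f : R -> R*R) (l : list R) c : (forall v, snd (f v) - fst (f v) = c) ->
  tlen (map f l) = INR (length l) * c.
Proof. intros H. induction l; simpl map; simpl tlen. simpl. lra. rewrite H, IHl.
  simpl length. rewrite S_INR. lra. Qed.

Lemma absle a b : Rabs a <= b -> - b <= a <= b.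
Proof. intros. pose proof (Rle_abs a). pose proof (Rle_abs (-a)). rewrite Rabs_Ropp in H1. lra. Qed.

Lemma two_half n : 2^n * (/2)^n = 1.
Proof. rewrite <- Rpow_mult_distr. replace (2 * /2) with 1 by field. apply pow1. Qed.

Lemma tau_eq m : tau m = (/2)^(2^(m+2)) * (/2)^m.
Proof. unfold tau, hh. rewrite !pow_add. simpl. field. Qed.

Lemma tau_est m : 2^(S m) * tau m <= 2 * (/2)^m.
Proof.
  rewrite tau_eq. assert (Hm : (m <= 2^(m+2))%nat).
  { assert (m < 2^m)%nat by (apply Nat.pow_gt_lin_r; lia).
    assert (2^m <= 2^(m+2))%nat by (apply Nat.pow_le_mono_r; lia). lia. }
  pose proof (pow_half_le _ _ Hm). pose proof (two_half m).
  replace (2 ^ S m * ((/ 2) ^ 2 ^ (m + 2) * (/ 2) ^ m)) with (2 * (/2)^(2^(m+2)) * (2^m * (/2)^m)) by (simpl; ring).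
  rewrite H0. lra.
Qed.

Lemma small x k e : ell1_star x -> 0 < e -> exists m, (k <= S m)%nat /\ EE x m = true /\ (/2)^m < e.
Proof.
  intros hx He. destruct (pow_lt_1_zero (/2) ltac:(rewrite Rabs_pos_eq; lra) e He) as [M0 HM].
  destruct (EE_inf x hx (Nat.max k M0)) as [m [Hm HE]]. exists m. split. lia. split; auto.
  specialize (HM m ltac:(lia)). rewrite Rabs_pos_eq in HM; auto. left; apply pow_half_pos.
Qed.

Lemma G_nd x k : ell1_star x -> nowhere_dense (G x k).
Proof.
  intros hx y [delta Hdel]. set (r := pos delta). assert (Hr : 0 < r) by apply cond_pos.
  destruct (small x k (r/16) hx ltac:(lra)) as [m [Hk [HE Hm]]].
  set (d := (/2)^(S m) * (r/16)).
  assert (Hd : 0 < d) by (unfold d; pose proof (pow_half_pos (S m)); nra).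
  set (l := map (fun v => (v - tau m - d, v + tau m + d)) (PL x (S m))).
  assert (Htau : 0 < tau m) by (unfold tau; pose proof (pow_half_pos (hh m)); lra).
  assert (Hlen : y + r/2 - (y - r/2) <= tlen l).
  { apply cover_len.
    - intros p Hp. unfold l in Hp. apply in_map_iff in Hp. destruct Hp as [v [<- _]]. simpl. lra.
    - lra.
    - intros z Hz.
      assert (Hza : adherence (G x k) z).
      { apply Hdel. unfold disc. fold r. apply Rabs_def1; lra. }
      destruct (Hza (disc z (mkposreal d Hd))) as [w [Hw HGw]].
      { exists (mkposreal d Hd). intros q Hq. exact Hq. }
      destruct (G_cover x k m w HGw Hk HE) as [v [Hv Hwv]].
      exists (v - tau m - d, v + tau m + d). split.
      + unfold l. apply in_map_iff. eauto.
      + unfold disc in Hw. simpl in Hw. simpl. apply Rabs_def2 in Hw.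
        apply absle in Hwv. lra. }
  unfold l in Hlen. rewrite (tlen_map _ _ (2 * tau m + 2 * d)) in Hlen by (intros; simpl; ring).
  rewrite PL_len, pow_INR in Hlen. simpl INR in Hlen.
  pose proof (tau_est m).
  assert (2 ^ S m * d = r/16).
  { unfold d. rewrite <- Rmult_assoc, two_half. ring. }
  replace (1+1) with 2 in Hlen by ring.
  assert (2 ^ S m * (2 * tau m + 2 * d) = 2 * (2^ S m * tau m) + 2 * (2 ^ S m * d)) by ring.
  lra.
Qed.

Lemma sum_scal f g c n : (forall k, g k = c * f k) -> sum_f_R0 g n = c * sum_f_R0 f n.
Proof. intros Hg. induction n; simpl; rewrite Hg; [ring|]. rewrite IHn. ring. Qed.

Lemma isum_scal f g c l : 0 < c -> (forall n, g n = c * f n) -> infinite_sum f l -> infinite_sum g (c * l).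
Proof.
  intros Hc Hg Hf e He. destruct (Hf (e / c)) as [N HN]. apply Rdiv_lt_0_compat; lra.
  exists N. intros n Hn. specialize (HN n Hn). rewrite (sum_scal f g c n Hg).
  unfold Rdist in *. rewrite <- Rmult_minus_distr_l, Rabs_mult, Rabs_pos_eq by lra.
  apply Rmult_lt_compat_l with (r := c) in HN; auto. replace (c * (e / c)) with e in HN by (field; lra). lra.
Qed.

Definition cen x n : R := nth (n - 2^(Nat.log2 n)) (PL x (Nat.log2 n)) 0.

Lemma null_G x (hx : ell1_star x) : forall eps, 0 < eps ->
  exists a b : nat -> R,
      (forall k, a k <= b k) /\
      (forall y, (exists N, G x N y) -> exists k, a k <= y <= b k) /\
      exists l, infinite_sum (fun k => b k - a k) l /\ l < eps.
Proof.
  intros eps Heps. set (e := eps / 8).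
  exists (fun n => cen x n - e * (/2)^n), (fun n => cen x n + e * (/2)^n).
  split; [|split].
  - intros k. pose proof (pow_half_pos k). unfold e. nra.
  - intros y [N HG]. destruct (small x N e hx ltac:(unfold e; lra)) as [m [Hk [HE Hm]]].
    destruct (G_cover x N m y HG Hk HE) as [v [Hv Hyv]].
    destruct (In_nth _ _ 0 Hv) as [j [Hj Hjv]]. rewrite PL_len in Hj.
    exists (2^(S m) + j)%nat.
    assert (Hlog : Nat.log2 (2^(S m) + j) = S m) by (eapply Nat.log2_unique'; eauto; lia).
    unfold cen. rewrite Hlog. replace (2 ^ S m + j - 2 ^ S m)%nat with j by lia. rewrite Hjv.
    assert (Hn : (2^(S m) + j <= 2^(m+2))%nat).
    { replace (2^(m+2))%nat with (2^(S m) + 2^(S m))%nat. lia.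
      replace (m+2)%nat with (S (S m)) by lia. simpl. lia. }
    pose proof (pow_half_le _ _ Hn). rewrite tau_eq in Hyv.
    pose proof (pow_half_pos (2^(m+2))). pose proof (pow_half_pos m).
    assert ((/ 2) ^ 2 ^ (m + 2) * (/ 2) ^ m <= e * (/2)^(2^(S m) + j)) by nra.
    apply absle in Hyv. lra.
  - exists (2 * e * /(1 - /2)). split.
    + apply isum_scal with (f := fun n => 1 * (/2)^n). unfold e; lra.
      intros n. ring. apply GP_infinite. rewrite Rabs_pos_eq; lra.
    + replace (/ (1 - /2)) with 2 by field. unfold e. lra.
Qed.

Theorem mainTheorem11 (x : nat -> R) (hx : ell1_star x) :
  exists I : (nat -> bool) -> Prop,
    is_ideal I /\
    (forall A, Fin A -> I A) /\
    ~ (forall A, I A <-> Fin A) /\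
    meager (A_I I x) /\ null_set (A_I I x).
Proof.
  exists (fun A => exists N, wit x A N).
  assert (HAG : forall s, A_I (fun A => exists N, wit x A N) x s -> exists N, G x N s).
  { intros s [A [[N HN] Hs]]. exists N, A. auto. }
  split; [|split; [|split; [|split]]].
  - split; [|split].
    + intros A B [N1 H1] [N2 H2]. exists (Nat.max N1 N2). intros n Hn.
      unfold unionN in Hn. apply Bool.orb_true_iff in Hn. destruct Hn as [Hn|Hn].
      destruct (H1 n Hn); [left; lia|auto]. destruct (H2 n Hn); [left; lia|auto].
    + intros A B Hs [N H]. exists N. intros n Hn. auto.
    + intros [N H]. destruct (H (2 * N)%nat eq_refl) as [Hl|He]. lia.
      apply EE_odd in He. rewrite <- (Nat.add_0_l (2*N)), Nat.odd_add_mul_2 in He. discriminate.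
  - intros A [N H]. exists N. intros n Hn. left. auto.
  - intros Heq. assert (HI : exists N, wit x (EE x) N) by (exists 0%nat; intros n Hn; right; auto).
    destruct (proj1 (Heq (EE x)) HI) as [N HN].
    destruct (EE_inf x hx N) as [n [Hn HE]]. specialize (HN n HE). lia.
  - exists (G x). split; [intros k; apply G_nd; exact hx | exact HAG].
  - intros eps Heps. destruct (null_G x hx eps Heps) as [a [b [H1 [H2 H3]]]].
    exists a, b. refine (conj H1 (conj _ H3)). intros y Hy. apply H2. apply HAG. exact Hy.
Qed.
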